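(* Let $G$ be a group and $L,N$ normal subgroups with $L\geqslant N$ and $N\geqslant[G,L]$. For $\nu\in\mathrm{Q}(N)^G$ the following are equivalent: (1) $\nu$ is extendable to $L$, i.e. $\nu=\psi|_N$ for some $\psi\in\mathrm{Q}(L)^G$; (2) $\mathscr{D}^t_{G,L}(\nu)<\infty$ for every $t\in\mathbb{N}$; (3) $\mathscr{D}^t_{G,L}(\nu)<\infty$ for some $t\in\mathbb{N}$; (4) $\mathscr{D}^1_{G,L}(\nu)=\mathscr{D}(\nu)$; (5) $\mathscr{D}^1_{G,L}(\nu)<\infty$.
   Context: $[g,h]=ghg^{-1}h^{-1}$. $\mathscr{D}(\nu)=\sup_{x_1,x_2\in N}|\nu(x_1x_2)-\nu(x_1)-\nu(x_2)|$. $\mathrm{Q}(N)^G$ (resp. $\mathrm{Q}(L)^G$): homogeneous quasimorphisms on $N$ (resp. $L$) invariant under conjugation by $G$. For $t\in\mathbb{N}$, $\mathscr{D}^t_{G,L}(\nu)=\sup\{|\nu([g_1,g_1']\cdots[g_t,g_t'])|: g_1,\dots,g_t\in G,\ g_1',\dots,g_t'\in L\}\in[0,\infty]$ (these products lie in $N$ since $N\geqslant[G,L]$). *)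

(* Defs.v *)
From HB Require Import structures.
From mathcomp Require Import all_boot all_order all_algebra.
From mathcomp Require Import classical_sets reals constructive_ereal ereal.
Set Implicit Arguments. Unset Strict Implicit. Unset Printing Implicit Defensive.
Import Order.TTheory GRing.Theory Num.Theory.
Local Open Scope classical_set_scope.
Local Open Scope ring_scope.

Section Defs.
Variable G : groupType.

Definition pcomm (g h : G) : G := (g * h * g^-1 * h^-1)%g.

Definition is_subgroup (H : G -> Prop) : Prop :=
  H 1%g /\ (forall x y, H x -> H y -> H (x * y)%g) /\ (forall x, H x -> H (x^-1)%g).

Definition is_normal (H : G -> Prop) : Prop :=
  is_subgroup H /\ forall g x, H x -> H (g * x * g^-1)%g.

Definition comm_subgroup (L : G -> Prop) (x : G) : Prop :=
  forall H : G -> Prop, is_subgroup H ->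
    (forall g l, L l -> H (pcomm g l)) -> H x.

Definition zpowg (x : G) (z : int) : G :=
  match z with
  | Posz n => (x ^+ n)%g
  | Negz n => ((x^-1) ^+ n.+1)%g
  end.

Variable R : realType.

(* nu : G -> R is regarded as a function on the subgroup H (values off H are
   irrelevant).  Homogeneous quasimorphism on H, invariant under conjugation
   by G: membership in Q(H)^G. *)
Definition in_QG (H : G -> Prop) (nu : G -> R) : Prop :=
  (exists D : R, forall x y, H x -> H y -> `|nu (x * y)%g - nu x - nu y| <= D)
  /\ (forall x (z : int), H x -> nu (zpowg x z) = z%:~R * nu x)
  /\ (forall g x, H x -> nu (g * x * g^-1)%g = nu x).

Definition defect (H : G -> Prop) (nu : G -> R) : \bar R :=
  ereal_sup [set (`|nu (x * y)%g - nu x - nu y|)%:E | x in H & y in H].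

Definition defect_GL (L : G -> Prop) (t : nat) (nu : G -> R) : \bar R :=
  ereal_sup [set e | exists (g g' : 'I_t -> G),
      (forall i, L (g' i)) /\
      e = (`|nu (\prod_(i < t) pcomm (g i) (g' i))%g|)%:E].

End Defs.

(* Main.v *)
Require Import Defs.
From HB Require Import structures.
From mathcomp Require Import all_boot all_order all_algebra.
From mathcomp Require Import classical_sets reals constructive_ereal ereal.
From mathcomp Require Import boolp zify ring lra.
Import Order.TTheory GRing.Theory Num.Theory.
Set Implicit Arguments. Unset Strict Implicit. Unset Printing Implicit Defensive.
Section GroupLemmas.
Variable G : groupType.
Local Open Scope group_scope.
Implicit Types a b x y g : G.

Lemma mulgACX a n : a * a ^+ n = a ^+ n * a.
Proof. by rewrite -expgS expgSr. Qed.

Definition ww a b n : G := a ^+ n * b ^+ n * ((a * b) ^+ n)^-1.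
Definition cc a b n : G :=
  pcomm (a ^+ n.+2 * b * (a ^+ n)^-1) (a ^+ n * b ^+ n * a^-1 * (a ^+ n)^-1).

Lemma ww_rec a b n : ww a b n.+2 = cc a b n * ww a b n.
Proof.
rewrite /ww /cc /pcomm.
set X := a ^+ n; set Y := b ^+ n; set Z := (a * b) ^+ n.
have -> : a ^+ n.+2 = a * a * X by rewrite !expgS mulgA.
have -> : b ^+ n.+2 = b * Y * b by rewrite expgS expgSr mulgA.
have -> : (a * b) ^+ n.+2 = Z * (a * b) * (a * b) by rewrite !expgSr.
rewrite !invgM !invgK !mulgA !mulgK !mulgVK.
have hc : commute a X by apply: commuteX.
have hc' : commute a^-1 X by apply: commute_sym; apply: commuteV; apply: commute_sym.
rewrite -!mulgA; do 5 congr (_ * _).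
rewrite !mulgA; congr (_ * _); rewrite -!mulgA -hc mulKg hc' mulKg //.
Qed.
Lemma conjX g x n : (g * x * g^-1) ^+ n = g * x ^+ n * g^-1.
Proof.
elim: n => [|n IH]; first by rewrite !expg0 mulg1 mulgV.
by rewrite expgS IH !mulgA mulgVK expgS !mulgA.
Qed.

Lemma zpow_addr1 x (z : int) : zpowg x (z + 1)%R = zpowg x z * x.
Proof.
case: z => n.
  have -> : (Posz n + 1)%R = Posz n.+1 by lia.
  by rewrite /= expgSr.
case: n => [|n].
  have -> : (Negz 0 + 1)%R = Posz 0 by lia.
  by rewrite /= expg1 mulVg.
have -> : (Negz n.+1 + 1)%R = Negz n by lia.
by rewrite /= [in RHS]expgSr mulgVK.
Qed.

Lemma zpow_subr1 x (z : int) : zpowg x (z - 1)%R = zpowg x z * x^-1.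
Proof.
have := zpow_addr1 x (z - 1)%R; rewrite GRing.subrK => ->; by rewrite mulgK.
Qed.

Lemma zpowD x (z k : int) : zpowg x (z + k)%R = zpowg x z * zpowg x k.
Proof.
case: k => n.
  elim: n => [|n IH]; first by rewrite GRing.addr0 /= expg0 mulg1.
  have -> : (z + Posz n.+1)%R = ((z + Posz n) + 1)%R by lia.
  rewrite zpow_addr1 IH -mulgA; congr (_ * _).
  have -> : Posz n.+1 = (Posz n + 1)%R by lia.
  by rewrite zpow_addr1.
elim: n => [|n IH].
  have -> : (z + Negz 0)%R = (z - 1)%R by lia.
  by rewrite zpow_subr1 /= expg1.
have -> : (z + Negz n.+1)%R = ((z + Negz n) - 1)%R by lia.
rewrite zpow_subr1 IH -mulgA; congr (_ * _).
have -> : Negz n.+1 = (Negz n - 1)%R by lia.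
by rewrite zpow_subr1.
Qed.

Lemma zpow0 x : zpowg x 0 = 1. Proof. by []. Qed.
Lemma zpow1 x : zpowg x 1 = x. Proof. by rewrite /= expg1. Qed.

Lemma zpowN x (z : int) : zpowg x (- z)%R = (zpowg x z)^-1.
Proof.
apply: (mulIg (zpowg x z)); rewrite -zpowD GRing.addNr zpow0 mulVg //.
Qed.

Lemma zpowS (P : G -> Prop) x (z : int) : is_subgroup P -> P x -> P (zpowg x z).
Proof.
move=> [h1 [hM hV]] hx.
have hX : forall y n, P y -> P (y ^+ n).
  by move=> y n hy; elim: n => [|n IH]; [rewrite expg0 | rewrite expgS; apply: hM].
by case: z => n /=; apply: hX => //; apply: hV.
Qed.

End GroupLemmas.

Section Real.
Variable R : realType.
Local Open Scope ring_scope.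

Lemma absD3 (x y z : R) : `|x| <= `|x - y - z| + `|y| + `|z|.
Proof.
have h := ler_normD (x - y - z + y) z; have h2 := ler_normD (x - y - z) y.
have e : x - y - z + y + z = x by ring.
rewrite e in h; lra.
Qed.

Lemma archi_le (x y c : R) :
  (forall m : nat, (0 < m)%N -> x <= y + c / m%:R) -> x <= y.
Proof.
move=> H; rewrite leNgt; apply/negP => hlt.
have e0 : 0 < x - y by rewrite subr_gt0.
case: (lerP c 0) => hc.
  by move: (H 1%N isT); rewrite divr1 => h; lra.
set m := (Num.truncn (c / (x - y))).+1.
have hm : c / (x - y) < m%:R by apply: truncnS_gt.
have m0 : 0 < m%:R :> R by rewrite ltr0n.
move: (H m isT) => h.
have : c / m%:R < x - y.
  by rewrite ltr_pdivrMr // mulrC -ltr_pdivrMr.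
lra.
Qed.
End Real.

Section Core.
Variable G : groupType.
Variable R : realType.
Local Open Scope ring_scope.
Implicit Types (P : G -> Prop) (f : G -> R) (x y a b : G).

Definition qm_on (P : G -> Prop) (f : G -> R) (K : R) :=
  forall x y, P x -> P y -> `|f (x * y)%g - f x - f y| <= K.

Lemma sg1 P : is_subgroup P -> P 1%g. Proof. by case. Qed.
Lemma sgM P x y : is_subgroup P -> P x -> P y -> P (x * y)%g.
Proof. by case=> _ [h _]; apply: h. Qed.
Lemma sgV P x : is_subgroup P -> P x -> P (x^-1)%g.
Proof. by case=> _ [_ h]; apply: h. Qed.
Lemma sgX P x n : is_subgroup P -> P x -> P (x ^+ n)%g.
Proof.
move=> hP hx; elim: n => [|n IH]; first by rewrite expg0; apply: sg1.
by rewrite expgS; apply: sgM.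
Qed.

Lemma qm_split P f K x y : qm_on P f K -> P x -> P y ->
  `|f (x * y)%g| <= `|f x| + `|f y| + K.
Proof.
move=> h hx hy; have := h _ _ hx hy; have := absD3 (f (x * y)%g) (f x) (f y); lra.
Qed.

Lemma ww_bound P f (K C : R) a b : is_subgroup P -> qm_on P f K -> f 1%g = 0 ->
  (forall n, P (cc a b n) /\ `|f (cc a b n)| <= C) ->
  forall m, P (ww a b m.*2) /\ `|f (ww a b m.*2)| <= m%:R * (C + K).
Proof.
move=> hP hK f1 hc; elim=> [|m [IH1 IH2]].
    rewrite /ww /= !expg0 !mulg1 invg1 mulg1 f1 normr0 mul0r; split=> //; exact: sg1.
rewrite doubleS ww_rec; have [c1 c2] := hc m.*2; split; first exact: sgM.
apply: (le_trans (qm_split hK c1 IH1)); rewrite -natr1 mulrDl mul1r; lra.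
Qed.

Lemma defect_fin P f (K : R) : is_subgroup P -> qm_on P f K ->
  exists S : R, defect P f = S%:E /\ 0 <= S /\ S <= K /\ qm_on P f S.
Proof.
move=> hP hK.
have sK : (defect P f <= K%:E)%E.
  by apply: ge_ereal_sup => e [x hx [y hy <-]]; rewrite lee_fin; apply: hK.
have s0 : (0 <= defect P f)%E.
  apply: (le_trans _ (ereal_sup_ubound _)); last first.
    by exists 1%g; [exact: sg1|exists 1%g; [exact: sg1|reflexivity]].
  by rewrite lee_fin.
move: sK s0; case E : (defect P f) => [S| |] //= sK s0.
exists S; split=> //; split; first by rewrite -lee_fin.
split; first by rewrite -lee_fin.
move=> x y hx hy; rewrite -lee_fin -E; apply: ereal_sup_ubound.
by exists x => //; exists y.
Qed.

Lemma bavard P f (K C : R) : is_subgroup P -> qm_on P f K ->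
  (forall x n, P x -> f (x ^+ n)%g = n%:R * f x) ->
  (forall x, P x -> f (x^-1)%g = - f x) ->
  (forall a b n, P a -> P b -> P (cc a b n) /\ `|f (cc a b n)| <= C) ->
  qm_on P f C.
Proof.
move=> hP hK hom hinv hc.
have f1 : f 1%g = 0 by rewrite -(expg0 1%g) hom ?mul0r //; exact: sg1.
have [S [sE [S0 [SK hS]]]] := defect_fin hP hK.
have main : forall a b, P a -> P b ->
    `|f (a * b)%g - f a - f b| <= (C + S) / 2.
  move=> a b ha hb; apply: (archi_le (c := S)) => m m0.
  set n := m.*2.
  have [hw1 hw2] := ww_bound hP hS f1 (fun k => hc a b k ha hb) m.
  have hab : P (a * b)%g by apply: sgM.
  have hA : P (a ^+ n * b ^+ n)%g by exact: sgM hP (sgX _ hP ha) (sgX _ hP hb).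
  have hI : P (((a * b) ^+ n)^-1)%g by exact: sgV hP (sgX _ hP hab).
  have e1 := hS _ _ hA hI.
  have e2 := hS _ _ (sgX n hP ha) (sgX n hP hb).
  rewrite -/(ww a b n) hinv ?hom // in e1; last exact: sgX.
  rewrite !hom // in e2.
  set E1 := f (ww a b n) - _ - _ in e1.
  set E2 := f _ - _ - _ in e2.
  have key : n%:R * (f (a * b)%g - f a - f b) = - f (ww a b n) + E1 + E2.
    by rewrite /E1 /E2; ring.
  have t := absD3 (n%:R * (f (a * b)%g - f a - f b)) E1 E2.
  have e3 : n%:R * (f (a * b)%g - f a - f b) - E1 - E2 = - f (ww a b n) by rewrite key; ring.
  rewrite e3 normrN normrM normr_nat in t.
  have nE : n%:R = 2 * m%:R :> R by rewrite /n -muln2 natrM mulrC.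
  rewrite nE in t.
  have mpos : 0 < m%:R :> R by rewrite ltr0n.
  have -> : (C + S) / 2 + S / m%:R = (m%:R * (C + S) + 2 * S) / (2 * m%:R) by field; rewrite gt_eqF.
  rewrite ler_pdivlMr ?mulr_gt0 //.
  lra.
have : (defect P f <= ((C + S) / 2)%:E)%E.
  by apply: ge_ereal_sup => e [x hx [y hy <-]]; rewrite lee_fin; apply: main.
rewrite sE lee_fin => h.
have SC : S <= C by lra.
by move=> x y hx hy; apply: le_trans (hS _ _ hx hy) SC.
Qed.

Lemma eq_archi (u v c : R) : (forall m : nat, (0 < m)%N -> `|u - v| <= c / m%:R) -> u = v.
Proof.
move=> h; apply/eqP; rewrite -subr_eq0 -normr_le0.
by apply: (archi_le (c := c)) => m m0; rewrite add0r; apply: h.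
Qed.

Lemma qm_K0 P f K : is_subgroup P -> qm_on P f K -> 0 <= K.
Proof. by move=> hP hK; apply: le_trans (hK _ _ (sg1 hP) (sg1 hP)). Qed.

Lemma powdev P f K x k : is_subgroup P -> qm_on P f K -> P x ->
  `|f (x ^+ k.+1)%g - k.+1%:R * f x| <= k%:R * K.
Proof.
move=> hP hK hx; elim: k => [|k IH]; first by rewrite expg1 mul1r subrr normr0 mul0r.
have := hK _ _ (sgX k.+1 hP hx) hx; rewrite -expgSr => h.
have := absD3 (f (x ^+ k.+2)%g - k.+2%:R * f x) (f (x ^+ k.+2)%g - f (x ^+ k.+1)%g - f x)
   (f (x ^+ k.+1)%g - k.+1%:R * f x).
have -> : f (x ^+ k.+2)%g - k.+2%:R * f x - (f (x ^+ k.+2)%g - f (x ^+ k.+1)%g - f x) -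
   (f (x ^+ k.+1)%g - k.+1%:R * f x) = 0.
  by rewrite -[k.+2]addn1 -[k.+1]addn1 !natrD; ring.
rewrite normr0 add0r.
have -> : k.+1%:R * K = k%:R * K + K by rewrite -addn1 natrD mulrDl mul1r.
lra.
Qed.

Definition hchar P f K (h : G -> R) :=
  forall x n, P x -> (0 < n)%N -> `|h x - f (x ^+ n)%g / n%:R| <= K / n%:R.

Lemma homog_exists P f K : is_subgroup P -> qm_on P f K -> exists h, hchar P f K h.
Proof.
move=> hP hK; have K0 := qm_K0 hP hK.
pose E x := [set r : R | exists n, (0 < n)%N /\ r = (f (x ^+ n)%g - K) / n%:R]%classic.
exists (fun x => reals.sup (E x)) => x n hx n0.
have key : forall m k, (0 < m)%N -> (0 < k)%N ->
    (f (x ^+ m)%g - K) / m%:R <= (f (x ^+ k)%g + K) / k%:R.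
  move=> [|m] [|k] // _ _.
  have h1 := powdev k hP hK (sgX m.+1 hP hx).
  have h2 := powdev m hP hK (sgX k.+1 hP hx).
  rewrite -expgnA in h1; rewrite -expgnA mulnC in h2.
  have mpos : 0 < m.+1%:R :> R by rewrite ltr0n.
  have kpos : 0 < k.+1%:R :> R by rewrite ltr0n.
  rewrite ler_pdivrMr // mulrAC ler_pdivlMr //.
  move: h1 h2; rewrite !ler_norml => /andP[h1 h1'] /andP[h2 h2'].
  rewrite -[k.+1]addn1 -[m.+1]addn1 !natrD in h1 h1' h2 h2' mpos kpos *.
  nra.
have hs : has_sup (E x).
  split; first by exists ((f (x ^+ 1)%g - K) / 1%:R), 1%N.
  exists ((f (x ^+ 1)%g + K) / 1%:R) => r [m [m0 ->]]; exact: key.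
have npos : 0 < n%:R :> R by rewrite ltr0n.
have lo : (f (x ^+ n)%g - K) / n%:R <= reals.sup (E x).
  by apply: sup_upper_bound => //; exists n.
have up : reals.sup (E x) <= (f (x ^+ n)%g + K) / n%:R.
  by apply: ge_sup; [case: hs | move=> r [m [m0 ->]]; exact: key].
rewrite ler_norml; move: lo up; rewrite !mulrBl !mulrDl; lra.
Qed.

Lemma tri (u v w : R) : `|u - v| <= `|u - w| + `|w - v|.
Proof. by have := ler_normD (u - w) (w - v); rewrite addrA subrK. Qed.

Lemma normD3 (x y z : R) : `|x + y + z| <= `|x| + `|y| + `|z|.
Proof. by apply: le_trans (ler_normD _ _) _; rewrite lerD2r ler_normD. Qed.

Section Hchar.
Variables (P : G -> Prop) (f h : G -> R) (K : R).
Hypotheses (hP : is_subgroup P) (hK : qm_on P f K) (hh : hchar P f K h).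

Lemma hc_close x : P x -> `|h x - f x| <= K.
Proof. by move=> hx; have := hh hx (isT : (0 < 1)%N); rewrite expg1 !divr1. Qed.

Lemma hc_one : h 1%g = 0.
Proof.
apply: (eq_archi (c := `|f 1%g| + K)) => n n0.
have npos : 0 < n%:R :> R by rewrite ltr0n.
have := hh (sg1 hP) n0; rewrite expg1n subr0 => h1.
have := tri (h 1%g) 0 (f 1%g / n%:R); rewrite !subr0 normrM normfV normr_nat.
rewrite mulrDl; lra.
Qed.

Lemma hc_hom x p : P x -> h (x ^+ p)%g = p%:R * h x.
Proof.
move=> hx; case: p => [|p]; first by rewrite expg0 mul0r hc_one.
apply: (eq_archi (c := 2 * K)) => n n0.
have npos : 0 < n%:R :> R by rewrite ltr0n.
have ppos : 0 < p.+1%:R :> R by rewrite ltr0n.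
set F := f (x ^+ (p.+1 * n))%g.
have A : `|h (x ^+ p.+1)%g - F / n%:R| <= K / n%:R.
  by have := hh (sgX p.+1 hP hx) n0; rewrite -expgnA.
have B : `|h x - F / (p.+1 * n)%:R| <= K / (p.+1 * n)%:R.
  by apply: hh => //; rewrite muln_gt0.
have B' : `|p.+1%:R * h x - F / n%:R| <= K / n%:R.
  have -> : p.+1%:R * h x - F / n%:R = p.+1%:R * (h x - F / (p.+1 * n)%:R).
    by rewrite natrM; field; rewrite !gt_eqF.
  rewrite normrM normr_nat.
  have -> : K / n%:R = p.+1%:R * (K / (p.+1 * n)%:R) by rewrite natrM; field; rewrite !gt_eqF.
  by rewrite ler_pM2l.
have := tri (h (x ^+ p.+1)%g) (p.+1%:R * h x) (F / n%:R).
rewrite distrC in B'; lra.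
Qed.

Lemma hc_inv x : P x -> h (x^-1)%g = - h x.
Proof.
move=> hx; apply: (eq_archi (c := 3 * K + `|f 1%g|)) => n n0.
have npos : 0 < n%:R :> R by rewrite ltr0n.
have hy := sgX n hP hx.
have A := hh (sgV hP hx) n0; rewrite expVgn in A.
have B := hh hx n0.
have Cq := hK (sgV hP hy) hy; rewrite mulVg in Cq.
set a := f ((x ^+ n)^-1)%g in A Cq; set b := f (x ^+ n)%g in B Cq.
have D : `|a / n%:R + b / n%:R| <= (K + `|f 1%g|) / n%:R.
  rewrite -mulrDl normrM normfV normr_nat.
  apply: ler_wpM2r; first by rewrite invr_ge0 ler0n.
  have := tri (a + b) 0 (f 1%g); rewrite !subr0 distrC.
  have -> : f 1%g - (a + b) = f 1%g - a - b by ring.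
  lra.
have e : h (x^-1)%g - - h x = (h (x^-1)%g - a / n%:R) + (h x - b / n%:R) + (a / n%:R + b / n%:R)
  by ring.
rewrite e; apply: le_trans (normD3 _ _ _) _.
rewrite !mulrDl; lra.
Qed.

Lemma hc_conj g (B : R) x :
  (forall y, P y -> P (g * y * g^-1)%g /\ `|f (g * y * g^-1)%g - f y| <= B) ->
  P x -> h (g * x * g^-1)%g = h x.
Proof.
move=> hg hx; apply: (eq_archi (c := 2 * K + B)) => n n0.
have npos : 0 < n%:R :> R by rewrite ltr0n.
have [hgx _] := hg _ hx.
have A := hh hgx n0; rewrite conjX in A.
have B1 := hh hx n0.
have [_ Cc] := hg _ (sgX n hP hx).
set a := f (g * x ^+ n * g^-1)%g in A Cc; set b := f (x ^+ n)%g in B1 Cc.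
have D : `|a / n%:R - b / n%:R| <= B / n%:R.
  rewrite -mulrBl normrM normfV normr_nat.
  by apply: ler_wpM2r; first by rewrite invr_ge0 ler0n.
have e : h (g * x * g^-1)%g - h x =
   (h (g * x * g^-1)%g - a / n%:R) + (- (h x - b / n%:R)) + (a / n%:R - b / n%:R) by ring.
rewrite e; apply: le_trans (normD3 _ _ _) _; rewrite normrN.
rewrite !mulrDl; lra.
Qed.

Lemma hc_qm : qm_on P h (4 * K).
Proof.
move=> x y hx hy.
have := hc_close (sgM hP hx hy); have := hc_close hx; have := hc_close hy.
have := hK hx hy.
have e : h (x * y)%g - h x - h y = (f (x * y)%g - f x - f y) + (h (x * y)%g - f (x * y)%g)
   - (h x - f x) - (h y - f y) by ring.
rewrite e => h1 h2 h3 h4.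
apply: le_trans (ler_normB _ _) _.
apply: le_trans (lerD (ler_normB _ _) (lexx _)) _.
apply: le_trans (lerD (lerD (ler_normD _ _) (lexx _)) (lexx _)) _.
lra.
Qed.
End Hchar.
End Core.

Section Main.
Variables (G : groupType) (R : realType) (L N : G -> Prop).
Hypotheses (hL : is_normal L) (hN : is_normal N) (hNL : forall x, N x -> L x)
  (hGL : forall x, comm_subgroup L x -> N x).
Variable nu : G -> R.
Hypothesis hnu : in_QG N nu.
Local Open Scope ring_scope.
Implicit Types (x y g l a b : G) (M : G -> Prop) (psi : G -> R).

Lemma sgL : is_subgroup L. Proof. by case: hL. Qed.
Lemma sgN : is_subgroup N. Proof. by case: hN. Qed.

Lemma commN g l : L l -> N (pcomm g l).
Proof. by move=> hl; apply: hGL => H _ hgen; apply: hgen. Qed.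

Lemma nu_hom x n : N x -> nu (x ^+ n)%g = n%:R * nu x.
Proof. by case: hnu => _ [h _] hx; have := h x (Posz n) hx; rewrite -pmulrn. Qed.

Lemma nu_inv x : N x -> nu (x^-1)%g = - nu x.
Proof.
by case: hnu => _ [h _] hx; have := h x (Negz 0) hx; rewrite /= expg1 NegzE mulrNz -pmulrn mulN1r.
Qed.

Lemma nu_conj g x : N x -> nu (g * x * g^-1)%g = nu x.
Proof. by case: hnu => _ [_ h] hx; apply: h. Qed.

Lemma cc_N a b n : L a -> L b -> N (cc a b n).
Proof.
move=> ha hb; apply: commN.
apply: sgM sgL _ (sgV sgL (sgX _ sgL ha)).
apply: sgM sgL _ (sgV sgL ha).
exact: sgM sgL (sgX _ sgL ha) (sgX _ sgL hb).
Qed.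

Variable C : R.
Hypothesis hC : forall g l, L l -> `|nu (pcomm g l)| <= C.

Lemma cc_bound a b n : L a -> L b -> `|nu (cc a b n)| <= C.
Proof.
move=> ha hb; apply: hC.
apply: sgM sgL _ (sgV sgL (sgX _ sgL ha)).
apply: sgM sgL _ (sgV sgL ha).
exact: sgM sgL (sgX _ sgL ha) (sgX _ sgL hb).
Qed.

Lemma nu_qmC : qm_on N nu C.
Proof.
have [D hD] : exists D, qm_on N nu D by case: hnu => [[D hD] _]; exists D => x y; apply: hD.
apply: (bavard sgN hD nu_hom nu_inv) => a b n ha hb; split.
  by apply: cc_N; apply: hNL.
by apply: cc_bound; apply: hNL.
Qed.

Record good M psi : Prop := Good {
  g_sub : is_subgroup M;
  g_N : forall x, N x -> M x;
  g_L : forall x, M x -> L x;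
  g_nu : forall x, N x -> psi x = nu x;
  g_qm : qm_on M psi C;
  g_hom : forall x n, M x -> psi (x ^+ n)%g = n%:R * psi x;
  g_inv : forall x, M x -> psi (x^-1)%g = - psi x;
  g_conj : forall g x, M x -> psi (g * x * g^-1)%g = psi x }.

Lemma good_nu : good N nu.
Proof.
split=> //; [exact: sgN | exact: nu_qmC | exact: nu_hom | exact: nu_inv | exact: nu_conj].
Qed.

Lemma M_normal M g x : is_subgroup M -> (forall y, N y -> M y) -> (forall y, M y -> L y) ->
  M x -> M (g * x * g^-1)%g.
Proof.
move=> hM hNM hML hx.
have -> : (g * x * g^-1 = pcomm g x * x)%g by rewrite /pcomm mulgVK.
by apply: sgM hM (hNM _ (commN _ (hML _ hx))) hx.
Qed.


Lemma normD4 (u v w z : R) : `|u + v + w + z| <= `|u| + `|v| + `|w| + `|z|.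
Proof. by apply: le_trans (ler_normD _ _) _; rewrite lerD2r normD3. Qed.

Lemma intr_neg k : (Negz k)%:~R = - k.+1%:R :> R.
Proof. by rewrite NegzE mulrNz -pmulrn. Qed.

Lemma zneg l k : zpowg l (Negz k) = ((l ^+ k.+1)^-1)%g.
Proof. by rewrite /= expVgn. Qed.

Lemma extend M psi l : good M psi -> L l ->
  exists M' psi', [/\ good M' psi', (forall x, M x -> M' x),
                      (forall x, M x -> psi' x = psi x) & M' l].
Proof.
move=> gM hl; have hM := g_sub gM.
have Mn : forall g x, M x -> M (g * x * g^-1)%g.
  by move=> g x; apply: M_normal => //; [exact: g_N gM | exact: g_L gM].
have psi1 : psi 1%g = 0 by rewrite -(expg0 1%g) (g_hom gM) ?mul0r //; exact: sg1.
have [alpha halpha] : exists alpha : R,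
    forall j, M (zpowg l j) -> psi (zpowg l j) = j%:~R * alpha.
  case: (pselect (exists p, (0 < p)%N /\ M (l ^+ p)%g)) => [[p [p0 hp]] | hno].
    exists (psi (l ^+ p)%g / p%:R).
    have ppos : p%:R != 0 :> R by rewrite gt_eqF // ltr0n.
    have pos : forall k, M (l ^+ k)%g -> psi (l ^+ k)%g = k%:R * (psi (l ^+ p)%g / p%:R).
      move=> k hk; have e1 := g_hom gM p hk; have e2 := g_hom gM k hp.
      rewrite -expgnA in e1; rewrite -expgnA mulnC e1 in e2.
      apply: (mulfI ppos); rewrite e2; field; exact: ppos.
    case=> k /= hk; first by rewrite -pmulrn; apply: pos.
    have hk' : M (l ^+ k.+1)%g by rewrite -[X in M X]invgK; apply: sgV hM _; rewrite -expVgn.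
    by rewrite expVgn (g_inv gM) // (pos k.+1 hk') intr_neg mulNr.
  exists 0 => j; rewrite mulr0; case: j => [[|k]|k] /=.
  - by rewrite expg0.
  - by move=> hk; exfalso; apply: hno; exists k.+1.
  - move=> hk; exfalso; apply: hno; exists k.+1; split=> //.
    by rewrite -[X in M X]invgK; apply: sgV hM _; rewrite -expVgn.
pose M' x := exists m j, M m /\ x = (m * zpowg l j)%g.
have hMM' : forall x, M x -> M' x.
  by move=> x hx; exists x, 0; rewrite zpow0 mulg1.
have hM'l : M' l by exists 1%g, 1; rewrite zpow1 mul1g; split=> //; exact: sg1.
have hM' : is_subgroup M'.
  split; first by apply: hMM'; exact: sg1.
  split.
    move=> _ _ [m [j [hm ->]]] [m' [k [hm' ->]]].
    exists (m * (zpowg l j * m' * (zpowg l j)^-1))%g, (j + k); split.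
      by apply: sgM hM hm (Mn _ _ hm').
    by rewrite zpowD !mulgA mulgVK.
  move=> _ [m [j [hm ->]]].
  exists (zpowg l (- j) * m^-1 * (zpowg l (- j))^-1)%g, (- j); split.
    by apply: Mn; apply: sgV.
  by rewrite mulgVK zpowN invgM.
have hM'L : forall x, M' x -> L x.
  move=> _ [m [j [hm ->]]]; apply: sgM sgL (g_L gM hm) _.
  by apply: zpowS sgL hl.
have hNM' : forall x, N x -> M' x by move=> x hx; apply: hMM'; exact: (g_N gM).
have [f0 hf0] : exists f0 : G -> R, forall x m j, M m -> x = (m * zpowg l j)%g ->
    `|f0 x - (psi m + j%:~R * alpha)| <= C.
  suff : forall x, exists r, forall m j, M m -> x = (m * zpowg l j)%g ->
    `|r - (psi m + j%:~R * alpha)| <= C.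
    by move/choice => [f hf]; exists f.
  move=> x; case: (pselect (M' x)) => [[m0 [j0 [hm0 e0]]] | hno]; last first.
      by exists 0 => m j hm e; exfalso; apply: hno; exists m, j.
    exists (psi m0 + j0%:~R * alpha) => m j hm e.
    have ed : zpowg l (j - j0) = (m^-1 * m0)%g.
      rewrite zpowD zpowN; apply: (mulgI m); apply: (mulIg (zpowg l j0)).
      by rewrite mulVKg mulgA mulgVK -e -e0.
    have hd : M (zpowg l (j - j0)) by rewrite ed; apply: sgM hM (sgV hM hm) hm0.
    have em0 : m0 = (m * zpowg l (j - j0))%g by rewrite ed mulVKg.
    have Q := g_qm gM hm hd; rewrite -em0 halpha // intrB in Q.
    have -> : psi m0 + j0%:~R * alpha - (psi m + j%:~R * alpha) =
       psi m0 - psi m - (j%:~R - j0%:~R) * alpha by ring.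
    exact: Q.
have frep : forall m j, M m -> `|f0 (m * zpowg l j)%g - (psi m + j%:~R * alpha)| <= C.
  by move=> m j hm; apply: hf0.
have hfq : qm_on M' f0 (4 * C).
  move=> _ _ [m [j [hm ->]]] [m' [k [hm' ->]]].
  set A := zpowg l j; set B := zpowg l k.
  set m'' := (A * m' * A^-1)%g.
  have hm'' : M m'' by apply: Mn.
  have exy : (m * A * (m' * B) = (m * m'') * zpowg l (j + k))%g.
    by rewrite zpowD /m'' !mulgA mulgVK.
  rewrite exy.
  have F1 := frep _ (j + k) (sgM hM hm hm''); have F2 := frep m j hm.
  have F3 := frep m' k hm'.
  have Q := g_qm gM hm hm''; have cj : psi m'' = psi m' by apply: (g_conj gM).
  rewrite intrD in F1; rewrite cj in Q.
  set a1 := f0 _ in F1; set a2 := f0 _ in F2; set a3 := f0 _ in F3.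
  have e : a1 - a2 - a3 = (a1 - (psi (m * m'')%g + (j%:~R + k%:~R) * alpha))
     + (- (a2 - (psi m + j%:~R * alpha))) + (- (a3 - (psi m' + k%:~R * alpha)))
     + (psi (m * m'')%g - psi m - psi m') by ring.
  rewrite e; apply: le_trans (normD4 _ _ _ _) _; rewrite !normrN; lra.
have hfc : forall g y, M' y ->
    M' (g * y * g^-1)%g /\ `|f0 (g * y * g^-1)%g - f0 y| <= 4 * C.
  move=> g _ [m [j [hm ->]]]; set A := zpowg l j.
  have hA : L A by apply: zpowS sgL hl.
  set pc := pcomm g A.
  have hpc : N pc by apply: commN.
  have hpcM : M pc by apply: (g_N gM).
  set m2 := (g * m * g^-1 * pc)%g.
  have hm2 : M m2 by apply: sgM hM (Mn g m hm) hpcM.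
  have e : (g * (m * A) * g^-1 = m2 * A)%g by rewrite /m2 /pc /pcomm !mulgA !mulgVK.
  rewrite e; split; first by exists m2, j.
  have F1 := frep m2 j hm2; have F2 := frep m j hm.
  have Q := g_qm gM (Mn g m hm) hpcM.
  have cj : psi (g * m * g^-1)%g = psi m by apply: (g_conj gM).
  have nuv : psi pc = nu pc by apply: (g_nu gM).
  have hb : `|nu pc| <= C by apply: hC.
  rewrite cj nuv -/m2 in Q.
  set a1 := f0 _ in F1; set a2 := f0 _ in F2.
  have e2 : a1 - a2 = (a1 - (psi m2 + j%:~R * alpha)) + (- (a2 - (psi m + j%:~R * alpha)))
     + (psi m2 - psi m - nu pc) + nu pc by ring.
  rewrite e2; apply: le_trans (normD4 _ _ _ _) _; rewrite !normrN; lra.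
have [h hh] := homog_exists hM' hfq.
have C0 : 0 <= C by apply: qm_K0 hM (g_qm gM).
have hpsi : forall m, M m -> h m = psi m.
  move=> m hm; apply: (eq_archi (c := 4 * C + C)) => n n0.
  have npos : 0 < n%:R :> R by rewrite ltr0n.
  have A := hh m n (hMM' _ hm) n0.
  have F := frep (m ^+ n)%g 0 (sgX n hM hm).
  rewrite zpow0 mulg1 mul0r addr0 (g_hom gM) // in F.
  have D : `|(f0 (m ^+ n)%g - n%:R * psi m) / n%:R| <= C / n%:R.
    rewrite normrM normfV normr_nat; apply: ler_wpM2r => //; by rewrite invr_ge0 ler0n.
  have e : h m - psi m = (h m - f0 (m ^+ n)%g / n%:R) + (f0 (m ^+ n)%g - n%:R * psi m) / n%:R.
    by field; rewrite gt_eqF.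
  rewrite e; apply: le_trans (ler_normD _ _) _; lra.
have hom := hc_hom hM' hh.
have inv := hc_inv hM' hfq hh.
have qm := bavard hM' (hc_qm hM' hfq hh) hom inv (C := C).
exists M', h; split=> //; split=> //.
- by move=> x hx; rewrite hpsi ?(g_nu gM) //; apply: (g_N gM).
- apply: qm => a b n ha hb; have ccN := cc_N n (hM'L _ ha) (hM'L _ hb); split; first exact: hNM'.
  rewrite hpsi ?(g_nu gM) //; last exact: (g_N gM).
  exact: cc_bound (hM'L _ ha) (hM'L _ hb).
- by move=> g x hx; apply: (hc_conj hM' hh (hfc g)).
Qed.

Lemma mixed (D : R) : qm_on N nu D -> forall g l, L l -> `|nu (pcomm g l)| <= (C + D) / 2.
Proof.
move=> hD g l hl; apply: (archi_le (c := (C + D) / 2)) => m m0.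
set n := m.*2.
set a := (g * l * g^-1)%g; set b := (l^-1)%g.
have ha : L a by case: hL => _ h; apply: h.
have hb : L b by apply: sgV sgL hl.
have f1 : nu 1%g = 0 by rewrite -(expg0 1%g) nu_hom ?mul0r //; exact: sg1 sgN.
have [hw1 hw2] := ww_bound sgN hD f1 (fun k => conj (cc_N k ha hb) (cc_bound k ha hb)) m.
have ec : (pcomm g l ^+ n = (ww a b n)^-1 * pcomm g (l ^+ n))%g.
  have e1 : (a ^+ n * b ^+ n = pcomm g (l ^+ n))%g by rewrite /a /b conjX expVgn /pcomm.
  have e2 : (a * b = pcomm g l)%g by [].
  by rewrite /ww e1 e2 invgM invgK mulgVK.
have hpc : N (pcomm g l) by apply: commN.
have hpcn : N (pcomm g (l ^+ n)) by apply: commN; apply: sgX sgL hl.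
have Q := hD _ _ (sgV sgN hw1) hpcn.
rewrite -ec nu_hom // nu_inv // in Q.
have hb1 : `|nu (pcomm g (l ^+ n))| <= C by apply: hC; apply: sgX sgL hl.
have npos : 0 < n%:R :> R by rewrite ltr0n double_gt0.
have nE : n%:R = 2 * m%:R :> R by rewrite /n -muln2 natrM mulrC.
have mpos : 0 < m%:R :> R by rewrite ltr0n.
have t := absD3 (n%:R * nu (pcomm g l)) (n%:R * nu (pcomm g l) - - nu (ww a b n) - nu (pcomm g (l ^+ n))) (- nu (ww a b n)).
have e3 : n%:R * nu (pcomm g l) - (n%:R * nu (pcomm g l) - - nu (ww a b n) - nu (pcomm g (l ^+ n))) - - nu (ww a b n) = nu (pcomm g (l ^+ n)) by ring.
rewrite e3 normrM normr_nat normrN nE in t; rewrite nE in Q.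
have -> : (C + D) / 2 + (C + D) / 2 / m%:R = (m%:R * (C + D) + (C + D)) / (2 * m%:R) by field; rewrite gt_eqF.
rewrite ler_pdivlMr ?mulr_gt0 //.
have D0 : 0 <= D by apply: qm_K0 sgN hD.
lra.
Qed.

Definition obj := {p : (G -> Prop) * (G -> R) | good p.1 p.2}.
Definition Ms (s : obj) := (sval s).1.
Definition Ps (s : obj) := (sval s).2.
Lemma gs (s : obj) : good (Ms s) (Ps s). Proof. exact: svalP s. Qed.
Definition ole (s t : obj) : Prop :=
  (forall x, Ms s x -> Ms t x) /\ (forall x, Ms s x -> Ps t x = Ps s x).
Definition t0 : obj := exist _ (N, nu) good_nu.

Lemma ole_t0 s : ole t0 s.
Proof. split=> x hx; [exact: (g_N (gs s)) | exact: (g_nu (gs s))]. Qed.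

Lemma chain_ub (A : set obj) : (forall s t, A s -> A t -> ole s t \/ ole t s) -> A t0 ->
  exists u : obj, forall s, A s -> ole s u.
Proof.
move=> htot hA0.
have common : forall s t x y, A s -> A t -> Ms s x -> Ms t y ->
    exists r, [/\ A r, Ms r x & Ms r y].
  move=> s t x y hs ht hx hy; case: (htot s t hs ht) => [[h1 _]|[h1 _]].
    by exists t; split=> //; apply: h1.
  by exists s; split=> //; apply: h1.
have cons : forall s t x, A s -> A t -> Ms s x -> Ms t x -> Ps s x = Ps t x.
  move=> s t x hs ht hx hx'; case: (htot s t hs ht) => [[_ h2]|[_ h2]].
    by rewrite h2.
  by rewrite h2.
pose Mu x := exists s, A s /\ Ms s x.
have [fu hfu] : exists fu : G -> R, forall x s, A s -> Ms s x -> fu x = Ps s x.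
  suff : forall x, exists r, forall s, A s -> Ms s x -> r = Ps s x.
    by move/choice => [f hf]; exists f.
  move=> x; case: (pselect (Mu x)) => [[s [hs hx]] | hno].
    by exists (Ps s x) => t ht hx'; apply: cons.
  by exists 0 => t ht hx; exfalso; apply: hno; exists t.
have hMu : is_subgroup Mu.
  split; first by exists t0; split=> //; exact: sg1 sgN.
  split.
    move=> x y [s [hs hx]] [t [ht hy]]; have [r [hr hx' hy']] := common _ _ _ _ hs ht hx hy.
    by exists r; split=> //; apply: sgM (g_sub (gs r)) hx' hy'.
  by move=> x [s [hs hx]]; exists s; split=> //; apply: sgV (g_sub (gs s)) hx.
have gu : good Mu fu.
  split=> //.
  - by move=> x hx; exists t0.
  - by move=> x [s [hs hx]]; apply: (g_L (gs s)).
  - by move=> x hx; rewrite (hfu x t0).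
  - move=> x y [s [hs hx]] [t [ht hy]]; have [r [hr hx' hy']] := common _ _ _ _ hs ht hx hy.
    have hxy := sgM (g_sub (gs r)) hx' hy'.
    rewrite (hfu _ r) // (hfu x r) // (hfu y r) //; exact: (g_qm (gs r)).
  - move=> x n [s [hs hx]]; have hxn := sgX n (g_sub (gs s)) hx.
    by rewrite (hfu _ s) // (hfu x s) //; apply: (g_hom (gs s)).
  - move=> x [s [hs hx]]; have hxn := sgV (g_sub (gs s)) hx.
    by rewrite (hfu _ s) // (hfu x s) //; apply: (g_inv (gs s)).
  - move=> g x [s [hs hx]].
    have hxn : Ms s (g * x * g^-1)%g.
      by apply: M_normal; [exact: (g_sub (gs s)) | exact: (g_N (gs s)) | exact: (g_L (gs s)) |].
    by rewrite (hfu _ s) // (hfu x s) //; apply: (g_conj (gs s)).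
exists (exist _ (Mu, fu) gu) => s hs; split=> x hx; first by exists s.
by rewrite /Ps /= (hfu x s).
Qed.

Lemma ext_exists : exists psi, good L psi.
Proof.
pose Rb := fun s t : obj => `[< ole s t >].
have [t tmax] : exists t, premaximal Rb t.
  apply: (@ZL_preorder obj t0 Rb).
- by move=> s; apply/asboolP; split.
- move=> r s t /asboolP [h1 h2] /asboolP [h3 h4]; apply/asboolP; split=> x hx.
    by apply: h3; apply: h1.
  by rewrite h4 ?h2 //; apply: h1.
- move=> A htot.
  have [u hu] : exists u : obj, forall s, (A s \/ s = t0) -> ole s u.
    apply: chain_ub.
      move=> s t [hs|->] [ht|->].
      + by case: (htot s t hs ht) => /asboolP; [left|right].
      + by right; apply: ole_t0.
      + by left; apply: ole_t0.
      + by left; apply: ole_t0.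
    by right.
  by exists u => s hs; apply/asboolP; apply: hu; left.
exists (Ps t).
have gt := gs t.
suff eL : forall x, L x -> Ms t x.
  case: gt => h1 h2 h3 h4 h5 h6 h7 h8; split=> //; first by apply: sgL.
  - by move=> x y hx hy; apply: h5; apply: eL.
  - by move=> x n hx; apply: h6; apply: eL.
  - by move=> x hx; apply: h7; apply: eL.
  - by move=> g x hx; apply: h8; apply: eL.
move=> l hl; apply: contrapT => hno.
have [M' [psi' [g' h1 h2 h3]]] := extend gt hl.
have /asboolP [hb _] := tmax (exist _ (M', psi') g') (asboolT (conj h1 h2)).
by apply: hno; apply: hb.
Qed.

End Main.

Unset Implicit Arguments. Set Strict Implicit. Set Printing Implicit Defensive.
Local Open Scope ring_scope.

Theorem theorem8p9 (G : groupType) (R : realType) (L N : G -> Prop)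
  (hL : is_normal L) (hN : is_normal N)
  (hNL : forall x, N x -> L x)
  (hGL : forall x, comm_subgroup L x -> N x)
  (nu : G -> R) (hnu : in_QG N nu) :
  [<-> exists psi : G -> R, in_QG L psi /\ (forall x, N x -> psi x = nu x);
       forall t : nat, (0 < t)%N -> (defect_GL L t nu < +oo)%E;
       exists t : nat, (0 < t)%N /\ (defect_GL L t nu < +oo)%E;
       defect_GL L 1 nu = defect N nu;
       (defect_GL L 1 nu < +oo)%E].
Proof.
have sgL : is_subgroup L by case: hL.
have sgN : is_subgroup N by case: hN.
have [Dn hDn] : exists D, qm_on N nu D by case: hnu => [[D hD] _]; exists D => x y; apply: hD.
have D1_ub : forall K : R, (forall g l, L l -> `|nu (pcomm g l)| <= K) -> (defect_GL L 1 nu <= K%:E)%E.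
  move=> K hK; apply: ge_ereal_sup => e [g [g' [hg' ->]]].
  by rewrite big_ord1 lee_fin; apply: hK.
have D1_el : forall g l, L l -> ((`|nu (pcomm g l)|)%:E <= defect_GL L 1 nu)%E.
  move=> g l hl; apply: ereal_sup_ubound; exists (fun=> g), (fun=> l); split=> //.
  by rewrite big_ord1.
have D1_fin : (defect_GL L 1 nu < +oo)%E ->
    exists C : R, defect_GL L 1 nu = C%:E /\ forall g l, L l -> `|nu (pcomm g l)| <= C.
  move=> hlt.
  have h0 := D1_el 1%g 1%g (sg1 sgL).
  move: hlt h0; case E : (defect_GL L 1 nu) => [C| |] //= _ _.
  exists C; split=> // g l hl; rewrite -lee_fin -E; exact: D1_el.
have P5to4 : (defect_GL L 1 nu < +oo)%E -> defect_GL L 1 nu = defect N nu.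
  move=> /D1_fin [C [eC hC]].
  have [S [eS [S0 [_ hS]]]] := defect_fin sgN hDn.
  have hmix := mixed hL hN hGL hnu hC hS.
  have CS : C <= S.
    have : (defect_GL L 1 nu <= ((C + S) / 2)%:E)%E by apply: D1_ub.
    rewrite eC lee_fin; lra.
  apply/eqP; rewrite eq_le; apply/andP; split.
    rewrite eS; apply: D1_ub => g l hl; apply: le_trans (hC _ _ hl) CS.
  rewrite eC; apply: ge_ereal_sup => e [x hx [y hy <-]]; rewrite lee_fin.
  exact: (nu_qmC hL hN hNL hGL hnu hC).
tfae.
- move=> [psi [[[Dp hDp] [hhom hconj]] hext]] t _.
  have pinv : forall x, L x -> psi (x^-1)%g = - psi x.
    move=> x hx; have := hhom x (Negz 0) hx; rewrite /= expg1 => ->.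
    by rewrite intr_neg mulN1r.
  have Dp0 : 0 <= Dp by apply: le_trans (hDp _ _ (sg1 sgL) (sg1 sgL)).
  have pcb : forall g l, L l -> `|psi (pcomm g l)| <= Dp.
    move=> g l hl.
    have hgl : L (g * l * g^-1)%g by case: hL => _ h; apply: h.
    have := hDp _ _ hgl (sgV sgL hl); rewrite hconj // pinv //.
    by have -> : psi (g * l * g^-1 * l^-1)%g - psi l - - psi l = psi (pcomm g l) by rewrite /pcomm; ring.
  have main : forall (s : seq 'I_t) (g g' : 'I_t -> G), (forall i, L (g' i)) ->
      N (\prod_(i <- s) pcomm (g i) (g' i))%g /\
      `|psi (\prod_(i <- s) pcomm (g i) (g' i))%g| <= (size s)%:R * (2 * Dp).
    move=> s g g' hg'; elim: s => [|i s [IH1 IH2]].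
      rewrite big_nil mul0r; split; first exact: sg1 sgN.
      have := hhom 1%g 0 (sg1 sgL); rewrite /= expg0 mul0r => ->; by rewrite normr0.
    rewrite big_cons; have hpc := commN hGL (g i) (hg' i).
    split; first exact: sgM sgN hpc IH1.
    apply: le_trans (qm_split hDp (hNL _ hpc) (hNL _ IH1)) _.
    have := pcb (g i) (g' i) (hg' i); rewrite /= -addn1 natrD; lra.
  apply: (@le_lt_trans _ _ ((size (index_enum (ordinal t)))%:R * (2 * Dp))%:E); last exact: ltry.
  apply: ge_ereal_sup => e [g [g' [hg' ->]]]; have [hN' hb] := main (index_enum 'I_t) g g' hg'.
  by rewrite lee_fin -hext.
- by move=> h; exists 1%N; split=> //; apply: h.
- move=> [[|t] [// _ ht]]; apply: P5to4; apply: le_lt_trans ht.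
  apply: ge_ereal_sup => e [g [g' [hg' ->]]]; rewrite big_ord1.
  apply: ereal_sup_ubound.
  exists (fun i : 'I_t.+1 => if val i == 0%N then g ord0 else 1%g),
         (fun i : 'I_t.+1 => if val i == 0%N then g' ord0 else 1%g); split.
    by move=> i; case: ifP => _ //; exact: sg1 sgL.
  rewrite big_ord_recl /= big1 ?mulg1 // => i _.
  by rewrite /= /pcomm invg1 !mulg1.
- move=> ->; have [S [eS _]] := defect_fin sgN hDn; by rewrite eS ltey.
- move=> /D1_fin [C [_ hC]].
  have [psi gp] := ext_exists hL hN hNL hGL hnu hC.
  exists psi; split; last exact: (g_nu gp).
  split; first by exists C => x y hx hy; apply: (g_qm gp).
  split; last by move=> g x hx; apply: (g_conj gp).
  move=> x [] n hx /=; first by rewrite -pmulrn; apply: (g_hom gp).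
  by rewrite (g_hom gp) ?(g_inv gp) ?intr_neg ?mulrN ?mulNr //; apply: sgV sgL hx.
Qed.
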